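(* Let $\mathcal A$ be finite, $r,\hat r:\mathcal A\to[0,1]$ with $r(a)\ge\hat r(a)$ for all $a\in\mathcal A$, $\eta>0$, and $\pi^{\mathrm{ref}}\in\Delta(\mathcal A)$ with $\pi^{\mathrm{ref}}(a)>0$ for all $a$. If $\hat\pi\in\arg\max_{\pi\in\Delta(\mathcal A)}J(\pi;\hat r)$, then $$\mathrm{SubOpt}(\hat\pi)=J(\pi^*;r)-J(\hat\pi;r)\le2\eta\sum_{a\in\mathcal A}\frac{\pi^*(a)^2}{\pi^{\mathrm{ref}}(a)}\big(r(a)-\hat r(a)\big)^2.$$
   Context: For $f:\mathcal A\to\mathbb R$, $J(\pi;f)=\sum_af(a)\pi(a)-\eta^{-1}\mathrm{KL}(\pi^{\mathrm{ref}}\|\pi)$, where $\mathrm{KL}(P\|Q)=\sum_aP(a)\log(P(a)/Q(a))$. $\pi^*$ denotes the (unique) maximizer of $J(\cdot;r)$ over $\Delta(\mathcal A)$. *)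

(* Defs.v *)
From HB Require Import structures.
From mathcomp Require Import all_boot all_order all_algebra.
From mathcomp Require Import all_classical all_reals all_analysis.
Set Implicit Arguments. Unset Strict Implicit. Unset Printing Implicit Defensive.
Import Order.TTheory GRing.Theory Num.Theory.
Local Open Scope ring_scope.

Definition simplex (R : realType) (A : finType) (p : A -> R) : Prop :=
  (forall a, 0 <= p a) /\ \sum_(a : A) p a = 1.

Definition KL (R : realType) (A : finType) (P Q : A -> R) : \bar R :=
  if [exists a, (0 < P a) && (Q a == 0)] then +oo%E
  else (\sum_(a : A) P a * ln (P a / Q a))%:E.

Definition J (R : realType) (A : finType) (eta : R) (pref : A -> R)
    (f : A -> R) (pi : A -> R) : \bar R :=
  ((\sum_(a : A) f a * pi a)%:E - (eta^-1)%:E * KL pref pi)%E.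

Definition is_argmax (R : realType) (A : finType) (eta : R) (pref : A -> R)
    (f : A -> R) (pi : A -> R) : Prop :=
  simplex pi /\ forall pi', simplex pi' -> (J eta pref f pi' <= J eta pref f pi)%E.

(* Main.v *)
Require Import Defs.
From HB Require Import structures.
From mathcomp Require Import all_boot all_order all_algebra.
From mathcomp Require Import all_classical all_reals all_analysis.
From mathcomp Require Import ring lra.
Import Order.TTheory GRing.Theory Num.Theory.
Local Open Scope ring_scope.
Lemma ln_le1 (R : realType) (y : R) : 0 < y -> ln y <= y - 1.
Proof. move=> y0; have := @le_ln1Dx R (y - 1); rewrite addrCA subrr addr0; apply; lra. Qed.

Lemma core (R : realType) (K c t : R) : 0 < K -> 0 <= c -> 0 < t ->
  c * (t - 1) - K * (t - 1 - ln t) <= 2 * c ^+ 2 * t ^+ 2 / K.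
Proof.
move=> K0 c0 t0.
have rhs0 : 0 <= 2 * c ^+ 2 * t ^+ 2 / K.
  by apply: divr_ge0; [rewrite -mulrA; apply: mulr_ge0 => //; apply: mulr_ge0; apply: sqr_ge0|exact: ltW].
case: (lerP t 1) => ht.
  have h1 : 0 <= c * (1 - t) by apply: mulr_ge0 => //; lra.
  have h2 : 0 <= K * (t - 1 - ln t) by apply: mulr_ge0; [exact: ltW| have := @ln_le1 _ t t0; lra].
  lra.
set m := Num.sqrt t.
have hm : m ^+ 2 = t by apply: sqr_sqrtr; exact: ltW.
have m0 : 0 <= m by apply: sqrtr_ge0.
have m1 : 1 <= m by nra.
have hl : ln t = ln m *+ 2 by rewrite -hm lnXn //; lra.
have hlm := @ln_le1 _ m (lt_le_trans ltr01 m1).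
have e1 : c * (t - 1) - K * (t - 1 - ln t) <= c * (m ^+ 2 - 1) - K * (m - 1) ^+ 2.
  rewrite hm hl; have : K * (m - 1) ^+ 2 <= K * (t - 1 - ln m *+ 2).
    apply: ler_wpM2l; first exact: ltW.
    rewrite -hm mulr2n; nra.
  lra.
apply: (le_trans e1); rewrite ler_pdivlMr // -hm.
have h : 0 <= (K * (m - 1) - c * (m + 1) / 2) ^+ 2 by apply: sqr_ge0.
have h' : 0 <= c ^+ 2 * (2 * m ^+ 4 - (m + 1) ^+ 2 / 4).
  apply: mulr_ge0; first exact: sqr_ge0. nra.
nra.
Qed.

Lemma term (R : realType) (eta p x y d : R) : 0 < eta -> 0 < p -> 0 < x -> 0 < y -> 0 <= d ->
  d * (y - x) + eta^-1 * p * (ln y - ln x) - eta^-1 * p * (y - x) / x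
  <= 2 * eta * ((y ^+ 2 / p) * d ^+ 2).
Proof.
move=> e0 p0 x0 y0 d0.
have := @core R (p / eta) (d * x) (y / x) (divr_gt0 p0 e0) (mulr_ge0 d0 (ltW x0)) (divr_gt0 y0 x0).
rewrite ln_div ?posrE //.
have ex : x != 0 by rewrite gt_eqF.
have ep : p != 0 by rewrite gt_eqF.
have ee : eta != 0 by rewrite gt_eqF.
have -> : d * x * (y / x - 1) - p / eta * (y / x - 1 - (ln y - ln x)) =
  d * (y - x) + eta^-1 * p * (ln y - ln x) - eta^-1 * p * (y - x) / x by field; rewrite ?ex ?ep ?ee ?ez.
have -> : 2 * (d * x) ^+ 2 * (y / x) ^+ 2 / (p / eta) = 2 * eta * ((y ^+ 2 / p) * d ^+ 2) by field; rewrite ?ex ?ep ?ee ?ez.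
done.
Qed.

Lemma lnlow (R : realType) (x z : R) : 0 < x -> 0 < z -> x <= 2 * z ->
  (z - x) / x - 2 * (z - x) ^+ 2 / x ^+ 2 <= ln z - ln x.
Proof.
move=> x0 z0 hxz.
have h := @ln_le1 R (x / z) (divr_gt0 x0 z0).
rewrite ln_div ?posrE // in h.
suff : (z - x) / x - 2 * (z - x) ^+ 2 / x ^+ 2 <= 1 - x / z by lra.
have ex : x != 0 by rewrite gt_eqF.
have ez : z != 0 by rewrite gt_eqF.
rewrite -subr_ge0.
have -> : 1 - x / z - ((z - x) / x - 2 * (z - x) ^+ 2 / x ^+ 2) =
   (z - x) ^+ 2 * (2 * z - x) / (x ^+ 2 * z) by field; rewrite ?ex ?ep ?ee ?ez.
apply: divr_ge0; last by apply: mulr_ge0; [apply: sqr_ge0|exact: ltW].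
apply: mulr_ge0; [apply: sqr_ge0|lra].
Qed.
Section S.
Variables (R : realType) (A : finType).
Definition Jr (k : R) (p f pi : A -> R) :=
  \sum_a f a * pi a - k * \sum_a p a * ln (p a / pi a).

Lemma J_pos (eta : R) (p f pi : A -> R) : (forall a, 0 < pi a) ->
  J eta p f pi = (Jr eta^-1 p f pi)%:E.
Proof.
move=> hpi; rewrite /J /KL; case: existsP => [[a /andP[_ /eqP h]]|_].
  by have := hpi a; rewrite h ltxx.
by rewrite /Jr EFinB EFinM.
Qed.

Lemma J_zero (eta : R) (p f pi : A -> R) a : 0 < eta -> 0 < p a -> pi a = 0 ->
  J eta p f pi = -oo%E.
Proof.
move=> e0 pa h; rewrite /J /KL; case: existsP => [_|[]]; last first.
  by exists a; rewrite pa h eqxx.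
rewrite gt0_muley ?lte_fin ?invr_gt0 // addeNy.
Qed.

Lemma Jr_diff (k : R) (p f u v : A -> R) : (forall a, 0 < p a) -> (forall a, 0 < u a) ->
  (forall a, 0 < v a) ->
  Jr k p f u - Jr k p f v = \sum_a (f a * (u a - v a) + k * (p a * (ln (u a) - ln (v a)))).
Proof.
move=> hp hu hv.
rewrite /Jr [RHS](eq_bigr (fun a => (f a * u a - k * (p a * ln (p a / u a))) -
   (f a * v a - k * (p a * ln (p a / v a))))); last first.
  move=> a _; rewrite !ln_div ?posrE //; ring.
rewrite sumrB !big_split /= !sumrN -!mulr_sumr; ring.
Qed.

Lemma grad (k : R) (p f x y : A -> R) : 0 < k -> (forall a, 0 < p a) ->
  (forall a, 0 < x a) -> simplex x -> simplex y ->
  (forall pi', simplex pi' -> (forall a, 0 < pi' a) -> Jr k p f pi' <= Jr k p f x) ->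
  \sum_a (f a + k * p a / x a) * (y a - x a) <= 0.
Proof.
move=> k0 hp hx [_ sx] [y0 sy] H.
set G := \sum_a _.
set Q := \sum_a p a * (y a - x a) ^+ 2 / x a ^+ 2.
have Q0 : 0 <= Q.
  apply: sumr_ge0 => a _; apply: divr_ge0; last exact: sqr_ge0.
  apply: mulr_ge0; [exact: ltW|exact: sqr_ge0].
have key : forall s, 0 < s -> s <= 1/2 -> G <= s * (2 * k * Q).
  move=> s s0 s1.
  pose z a := x a + s * (y a - x a).
  have zpos : forall a, 0 < z a.
    move=> a; rewrite /z; have := hx a; have := y0 a; nra.
  have zs : simplex z.
    split; first by move=> a; exact: ltW.
    rewrite /z big_split /= -mulr_sumr sumrB sx sy; ring.
  have := H z zs zpos; rewrite -subr_le0 Jr_diff // => hle.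
  have : s * G - s ^+ 2 * (2 * k * Q) <= 0.
    apply: le_trans hle.
    rewrite /G /Q mulr_sumr mulr_sumr mulr_sumr -sumrB; apply: ler_sum => a _.
    have hl := @lnlow R (x a) (z a) (hx a) (zpos a).
    have hz : x a <= 2 * z a by rewrite /z; have := hx a; have := y0 a; nra.
    have {hl} := hl hz.
    have -> : z a - x a = s * (y a - x a) by rewrite /z; ring.
    move=> hl.
    have hk : 0 <= k * p a by apply: mulr_ge0; apply: ltW.
    have := ler_wpM2l hk hl.
    have ex : x a != 0 by rewrite gt_eqF.
    set L := ln _ - ln _.
    have -> : k * p a * ((s * (y a - x a)) / x a - 2 * (s * (y a - x a)) ^+ 2 / x a ^+ 2)
      = s * (k * p a / x a * (y a - x a)) - s ^+ 2 * (2 * k * (p a * (y a - x a) ^+ 2 / x a ^+ 2)).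
      by field; rewrite ?ex.
    move=> h2.
    have -> : s * ((f a + k * p a / x a) * (y a - x a)) = s * (f a * (y a - x a)) + s * (k * p a / x a * (y a - x a)) by ring.
    have -> : f a * (s * (y a - x a)) = s * (f a * (y a - x a)) by ring.
    have -> : k * (p a * L) = k * p a * L by ring.
    lra.
  move=> h; have : s * (G - s * (2 * k * Q)) <= 0 by rewrite mulrBr mulrA -expr2.
  by rewrite pmulr_rle0 // subr_le0.
case: (lerP G 0) => // hG.
set D := 2 * k * Q + G.
have kQ : 0 <= k * Q by apply: mulr_ge0 => //; exact: ltW.
have D0 : 0 < D by rewrite /D; lra.
have eD : D != 0 by rewrite gt_eqF.
have := key (G / (2 * D)).
have s0 : 0 < G / (2 * D) by apply: divr_gt0 => //; lra.
have hsD : G / (2 * D) * D = G / 2 by field; rewrite ?eD.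
have s1 : G / (2 * D) <= 1 / 2.
  have : G / (2 * D) * D <= 1 / 2 * D by rewrite hsD /D; lra.
  by rewrite ler_pM2r.
move=> /(_ s0 s1) h.
have : G / (2 * D) * (2 * k * Q) <= G / (2 * D) * D.
  by apply: ler_wpM2l; [exact: ltW| rewrite /D; lra].
rewrite hsD; lra.
Qed.
End S.

Lemma argmax_pos (R : realType) (A : finType) (eta : R) (p f pi : A -> R) :
  0 < eta -> simplex p -> (forall a, 0 < p a) -> is_argmax eta p f pi -> forall a, 0 < pi a.
Proof.
move=> e0 s hp [[pi0 _] H] a.
rewrite lt_neqAle pi0 andbT; apply/negP => /eqP h.
have := H p s; rewrite (@J_zero R A eta p f pi a e0 (hp a) (esym h)) (@J_pos R A eta p f p hp).
by rewrite leeNy_eq.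
Qed.

Theorem lemma5p5 (R : realType) (A : finType) (r rhat : A -> R) (eta : R)
  (pref pistar pihat : A -> R) :
  (forall a, 0 <= rhat a <= 1) -> (forall a, 0 <= r a <= 1) ->
  (forall a, rhat a <= r a) ->
  0 < eta ->
  simplex pref -> (forall a, 0 < pref a) ->
  is_argmax eta pref r pistar ->
  is_argmax eta pref rhat pihat ->
  (J eta pref r pistar - J eta pref r pihat <=
   (2 * eta * \sum_(a : A) (pistar a ^+ 2 / pref a) * (r a - rhat a) ^+ 2)%:E)%E.
Proof.
move=> hrh hr hle e0 sp pp Hs Hh.
have ps := @argmax_pos R A eta pref _ _ e0 sp pp Hs.
have ph := @argmax_pos R A eta pref _ _ e0 sp pp Hh.
rewrite (@J_pos R A eta pref r _ ps) (@J_pos R A eta pref r _ ph) -EFinB lee_fin.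
have G := @grad R A eta^-1 pref rhat pihat pistar.
have {G} G : \sum_a (rhat a + eta^-1 * pref a / pihat a) * (pistar a - pihat a) <= 0.
  apply: G => //; first by rewrite invr_gt0.
  - by case: Hh.
  - by case: Hs.
  move=> pi' s' p'; have := (proj2 Hh) pi' s'.
  by rewrite (@J_pos R A eta pref rhat _ p') (@J_pos R A eta pref rhat _ ph) lee_fin.
rewrite Jr_diff // mulr_sumr.
apply: (le_trans (y := \sum_a (r a * (pistar a - pihat a) +
     eta^-1 * (pref a * (ln (pistar a) - ln (pihat a)))) -
   \sum_a (rhat a + eta^-1 * pref a / pihat a) * (pistar a - pihat a))).
  lra.
rewrite -sumrB; apply: ler_sum => a _.
have := @term R eta (pref a) (pihat a) (pistar a) (r a - rhat a) e0 (pp a) (ph a) (ps a).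
rewrite subr_ge0 => /(_ (hle a)) h.
lra.
Qed.
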